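(* Let $X_1,X_2,\dots$ be real random variables on a probability space with $\mathbb E X_n=0$, and suppose there are constants $M<\infty$, $C<\infty$ and $0\le\gamma<2$ such that $\|X_n\|_\infty\le M$ and $\operatorname{Var}\big(\sum_{k=1}^nX_k\big)\le Cn^\gamma$ for all $n$. Then for every $\eta>\frac{\gamma+1}{3}$, $\sum_{k=1}^nX_k=O(n^\eta)$ almost surely.
   Context: No independence is assumed among the $X_n$. *)

(* Defs.v *)
From HB Require Import structures.
From mathcomp Require Import all_boot all_order all_algebra.
From mathcomp Require Import all_classical all_reals all_analysis.
From mathcomp Require Import probability.

(* Main.v *)
Require Import Defs.
From HB Require Import structures.
From mathcomp Require Import all_boot all_order all_algebra.
From mathcomp Require Import all_classical all_reals all_analysis.
From mathcomp Require Import probability.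
From mathcomp Require Import zify ring lra measurable_realfun.
Import Order.TTheory GRing.Theory Num.Theory.
Import numFieldNormedType.Exports.
Local Open Scope classical_set_scope.
Local Open Scope ring_scope.

Lemma pow2_powR (R : realType) (n : nat) : ((2 ^ n)%N%:R : R) = 2 `^ n%:R.
Proof. by rewrite powR_mulrn // natrX. Qed.

Lemma det_n (R : realType) (x : nat -> R) (M B eta : R) (p q : nat) :
  (0 < q)%N -> (p <= q)%N -> p%:R <= q%:R * eta -> 0 <= eta -> 0 <= B ->
  (forall n, (1 <= n)%N -> `|x n| <= M) ->
  (forall k m, (m < 2 ^ (q + (q - p) * k))%N ->
     `|\sum_(1 <= j < (m * 2 ^ (p * k)).+1) x j| <= B * (2 ^ (p * k))%:R) ->
  forall n, (1 <= n)%N -> `|\sum_(1 <= j < n.+1) x j| <= (B + `|M|) * n%:R `^ eta.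
Proof.
move=> q0 pq peta eta0 B0 xM Hs n n1.
have hN : (1 < 2 ^ q)%N by rewrite -[X in (X < _)%N](expn0 2) ltn_exp2l.
set k := trunc_log (2 ^ q) n.
have hk1 : (2 ^ (q * k) <= n)%N by rewrite expnM; exact: trunc_logP.
have hk2 : (n < 2 ^ (q * k.+1))%N by rewrite expnM; exact: trunc_log_ltn.
set dk := (2 ^ (p * k))%N.
have dk0 : (0 < dk)%N by rewrite expn_gt0.
set m := (n %/ dk)%N.
have hn := divn_eq n dk.
have hmod : (n %% dk < dk)%N by rewrite ltn_pmod.
have hm : (m < 2 ^ (q + (q - p) * k))%N.
  rewrite -(ltn_pmul2r dk0) -expnD.
  have -> : (q + (q - p) * k + p * k = q * k.+1)%N.
    have : (p * k <= q * k)%N by rewrite leq_mul2r pq orbT.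
    rewrite mulnBl mulnS; lia.
  apply: leq_ltn_trans hk2; rewrite [leqRHS]hn; exact: leq_addr.
have hdk : (dk%:R : R) <= n%:R `^ eta.
  rewrite /dk pow2_powR.
  apply: (@le_trans _ _ (2 `^ ((q * k)%:R * eta))).
    apply: ler_powR; first lra.
    by rewrite !natrM mulrAC; apply: ler_wpM2r.
  rewrite powRrM -pow2_powR.
  apply: ge0_ler_powR => //; rewrite ?nnegrE ?ler_nat //.
set g := (m * dk)%N.
have hgn : (n - g = n %% dk)%N by rewrite {1}hn /g /m addKn.
have hg : (g <= n)%N by rewrite [leqRHS]hn /g /m leq_addr.
rewrite (big_cat_nat _ (n:=g.+1)) //=.
have tail : `|\sum_(g.+1 <= j < n.+1) x j| <= `|M| * dk%:R.
  apply: le_trans (ler_norm_sum _ _ _) _.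
  apply: le_trans (_ : \sum_(g.+1 <= j < n.+1) `|M| <= _).
    apply: ler_sum_nat => j /andP[j1 _]; apply: le_trans (xM j _) (ler_norm _).
    exact: leq_trans j1.
  rewrite sumr_const_nat subSS hgn -[`|M| *+ _]mulr_natr; apply: ler_wpM2l => //.
  by rewrite ler_nat ltnW.
apply: le_trans (ler_normD _ _) _.
apply: le_trans (_ : (B + `|M|) * dk%:R <= _); last first.
  by apply: ler_wpM2l => //; apply: addr_ge0.
rewrite mulrDl; apply: lerD => //.
exact: Hs.
Qed.

Lemma det_O (R : realType) (x : nat -> R) (M B eta : R) (p q : nat) :
  (0 < q)%N -> (p <= q)%N -> p%:R <= q%:R * eta -> 0 <= eta -> 0 <= B ->
  (forall n, (1 <= n)%N -> `|x n| <= M) ->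
  (forall k m, (m < 2 ^ (q + (q - p) * k))%N ->
     `|\sum_(1 <= j < (m * 2 ^ (p * k)).+1) x j| <= B * (2 ^ (p * k))%:R) ->
  (fun n : nat => \sum_(1 <= j < n.+1) x j) =O_\oo (fun n : nat => n%:R `^ eta).
Proof.
move=> q0 pq peta eta0 B0 xM Hs.
apply/eqO_exP; exists (B + `|M| + 1).
  by rewrite ltr_pwDr // addr_ge0.
near=> n.
rewrite [X in _ <= _ * X]ger0_norm ?powR_ge0 //.
have n1 : (1 <= n)%N by near: n; exists 1%N.
have h := @det_n _ _ _ _ _ _ _ q0 pq peta eta0 B0 xM Hs _ n1.
apply: le_trans h _; rewrite [leRHS]mulrDl mul1r lerDl; exact: powR_ge0.
Unshelve. all: by end_near. Qed.
Local Open Scope ereal_scope.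

Definition Ssum {T : Type} {R : realType} (X : nat -> T -> R) (n : nat) (w : T) : R :=
  (\sum_(1 <= k < n.+1) X k w)%R.

Lemma Smeas d (T : measurableType d) (R : realType) (P : probability T R)
  (X : nat -> {RV P >-> R}) n : measurable_fun setT (Ssum (fun k => X k) n).
Proof.
rewrite /Ssum; apply: measurable_sum => i; exact: measurable_funPT.
Qed.

Lemma Xint {d} {T : measurableType d} {R : realType} {P : probability T R}
  {Y : {RV P >-> R}} {M : R} : {ae P, forall w, `|Y w| <= M}%R ->
  P.-integrable setT (EFin \o Y).
Proof.
move=> Hb; apply/integrableP; split.
  by apply/measurable_EFinP; exact: measurable_funPT.
apply: (@le_lt_trans _ _ (\int[P]_(x in setT) (cst `|M|%:E x))).
  apply: ae_ge0_le_integral => //.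
  - apply: measurableT_comp; first exact: abse_measurable.
    apply/measurable_EFinP; exact: measurable_funPT.
  - by move=> x _ /=; rewrite lee_fin normr_ge0.
  - apply: filterS Hb => w hw _.
    by rewrite /= lee_fin (le_trans hw) // ler_norm.
by rewrite integral_cst //= probability_setT mule1 ltry.
Qed.

Lemma Sint {d} {T : measurableType d} {R : realType} {P : probability T R}
  {X : nat -> {RV P >-> R}} {M : R} :
  (forall n, (1 <= n)%N -> ('E_P[X n] = 0)) ->
  (forall n, (1 <= n)%N -> {ae P, forall w, `|X n w| <= M}%R) ->
  forall n, P.-integrable setT (EFin \o Ssum (fun k => X k) n) /\
    \int[P]_w (Ssum (fun k => X k) n w)%:E = 0.
Proof.
move=> HE HM; elim=> [|n [IHi IHe]].
  have -> : Ssum (fun k => X k) 0 = fun=> 0%R.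
    by apply/funext => w; rewrite /Ssum big_geq.
  split; first exact: integrable0.
  by rewrite integral0.
have E w : (Ssum (fun k => X k) n.+1 w)%:E =
    (Ssum (fun k => X k) n w)%:E + (X n.+1 w)%:E.
  by rewrite /Ssum big_nat_recr.
have iX := Xint (HM n.+1 isT).
split.
  rewrite (_ : EFin \o _ = (EFin \o Ssum (fun k => X k) n) \+ (EFin \o X n.+1)).
    exact: integrableD.
  by apply/funext => w; exact: E.
under eq_integral do rewrite E.
rewrite integralD // IHe add0e.
by have := HE n.+1 isT; rewrite expectation_def.
Qed.

Lemma ES2 {d} {T : measurableType d} {R : realType} {P : probability T R}
  {X : nat -> {RV P >-> R}} {M C gamma : R} :
  (forall n, (1 <= n)%N -> ('E_P[X n] = 0)) ->
  (forall n, (1 <= n)%N -> {ae P, forall w, `|X n w| <= M}%R) ->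
  (forall n, (1 <= n)%N ->
     ('V_P[fun w => (\sum_(1 <= k < n.+1) X k w)%R] <= (C * n%:R `^ gamma)%:E)) ->
  forall n, \int[P]_w ((Ssum (fun k => X k) n w) ^+ 2)%:E <= (`|C| * n%:R `^ gamma)%:E.
Proof.
move=> HE HM HV [|n].
  have -> : Ssum (fun k => X k) 0 = fun=> 0%R.
    by apply/funext => w; rewrite /Ssum big_geq.
  rewrite (_ : (fun w => _) = cst 0); last by apply/funext => w /=; rewrite expr0n.
  by rewrite integral0 lee_fin mulr_ge0 // powR_ge0.
have := HV n.+1 isT.
have E0 : 'E_P[fun w => (\sum_(1 <= k < n.+2) X k w)%R] = 0.
  by rewrite expectation.unlock; exact: (Sint HE HM n.+1).2.
rewrite /variance covariance.unlock E0 /= expectation.unlock.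
rewrite (_ : (_ * _)%R = (fun w => Ssum (fun k => X k) n.+1 w ^+ 2)%R); last first.
  by apply/funext => w; rewrite /Ssum !fctE expr2; congr (_ * _)%R; apply: subr0.
move/le_trans; apply; rewrite lee_fin.
by apply: ler_wpM2r; [exact: powR_ge0 | exact: ler_norm].
Qed.

Lemma term_le (R : realType) (f : nat -> \bar R) n m :
  (forall i, 0 <= f i) -> (m < n)%N -> f m <= \sum_(0 <= i < n) f i.
Proof.
move=> f0 mn.
have := @lee_sum_nneg_natr R f xpredT 0%N (fun i _ _ => f0 i) m.+1 n mn.
apply: le_trans.
by rewrite big_nat_recr //= leeDr // sume_ge0.
Qed.

Lemma geo_bound (R : realType) (A r : R) : (0 <= A)%R -> (0 < r)%R -> (r < 1)%R ->
  \sum_(0 <= k <oo) (A * r ^+ k)%:E <= (A / (1 - r))%:E.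
Proof.
move=> A0 r0 r1; apply: lime_le.
  by apply: is_cvg_nneseries => n _ _; rewrite lee_fin mulr_ge0 // exprn_ge0 // ltW.
apply: nearW => n; rewrite sumEFin lee_fin.
have := @geometric_le_lim R n A r A0 r0; rewrite ger0_norm ?(ltW r0) //.
by move=> /(_ r1).
Qed.

Definition dk (p k : nat) : nat := (2 ^ (p * k))%N.
Definition cnt (p q k : nat) : nat := (2 ^ (q + (q - p) * k))%N.
Definition term {T : Type} {R : realType} (X : nat -> T -> R) (p k m : nat) (w : T) : R :=
  (Ssum X (m * dk p k) w ^+ 2 * ((dk p k)%:R ^+ 2)^-1)%R.
Definition fk {T : Type} {R : realType} (X : nat -> T -> R) (p q k : nat) (w : T) : \bar R :=
  \sum_(0 <= m < cnt p q k) (term X p k m w)%:E.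

Lemma term_ge0 {T : Type} {R : realType} (X : nat -> T -> R) p k m w :
  (0 <= term X p k m w)%R.
Proof. by rewrite /term mulr_ge0 ?sqr_ge0 // invr_ge0 exprn_ge0. Qed.

Lemma fk_ge0 {T : Type} {R : realType} (X : nat -> T -> R) p q k w : 0 <= fk X p q k w.
Proof. by rewrite /fk sume_ge0 // => m _; rewrite lee_fin term_ge0. Qed.

Lemma term_meas d (T : measurableType d) (R : realType) (P : probability T R)
  (X : nat -> {RV P >-> R}) p k m :
  measurable_fun setT (EFin \o term (fun k => X k) p k m).
Proof.
apply/measurable_EFinP; apply: measurable_funM; last exact: measurable_cst.
by apply: measurable_funX; exact: Smeas.
Qed.

Lemma fk_meas d (T : measurableType d) (R : realType) (P : probability T R)
  (X : nat -> {RV P >-> R}) p q k :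
  measurable_fun setT (fk (fun k => X k) p q k).
Proof.
rewrite /fk; apply: emeasurable_sum => m; exact: term_meas.
Qed.

Lemma fk_bound {d} {T : measurableType d} {R : realType} {P : probability T R}
  {X : nat -> {RV P >-> R}} {M C gamma : R} :
  (forall n, (1 <= n)%N -> ('E_P[X n] = 0)) ->
  (forall n, (1 <= n)%N -> {ae P, forall w, `|X n w| <= M}%R) ->
  (forall n, (1 <= n)%N ->
     ('V_P[fun w => (\sum_(1 <= k < n.+1) X k w)%R] <= (C * n%:R `^ gamma)%:E)) ->
  (0 <= gamma)%R ->
  forall p q k, \int[P]_w fk (fun k => X k) p q k w <=
  ((cnt p q k)%:R * (((dk p k)%:R ^+ 2)^-1 *
     (`|C| * ((cnt p q k * dk p k)%N%:R `^ gamma))))%:E.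
Proof.
move=> HE HM HV g0 p q k.
rewrite /fk ge0_integral_sum //; last 2 first.
- move=> m; exact: term_meas.
- by move=> m w _; rewrite lee_fin term_ge0.
set b := (((dk p k)%:R ^+ 2)^-1 * _)%R.
rewrite (_ : ((cnt p q k)%:R * b = \sum_(0 <= m < cnt p q k) b)%R); last first.
  by rewrite sumr_const_nat subn0 mulr_natl.
rewrite -sumEFin big_nat_cond [leRHS]big_nat_cond.
apply: lee_sum => m /andP[/andP[_ mc] _].
under eq_integral => w _ do rewrite /term EFinM muleC.
rewrite ge0_integralZl //; last 2 first.
- apply/measurable_EFinP; apply: measurable_funX; exact: Smeas.
- by move=> w _; rewrite lee_fin sqr_ge0.
rewrite /b EFinM; apply: lee_pmul => //.
- by apply: integral_ge0 => w _; rewrite lee_fin sqr_ge0.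
apply: le_trans (ES2 HE HM HV (m * dk p k)) _.
rewrite lee_fin; apply: ler_wpM2l => //.
apply: ge0_ler_powR => //; rewrite ?nnegrE ?ler0n // ler_nat leq_mul2r.
by rewrite (ltnW mc) orbT.
Qed.

Section pow2.
Local Open Scope ring_scope.
Variable R : realType.
Lemma p2n (n : nat) : ((2 ^ n)%N%:R : R) = 2 `^ n%:R.
Proof. by rewrite powR_mulrn // natrX. Qed.
Lemma p2D (x y : R) : 2 `^ x * 2 `^ y = 2 `^ (x + y).
Proof. by rewrite powRD // pnatr_eq0 implybT. Qed.
Lemma p2X (x : R) n : (2 `^ x) ^+ n = 2 `^ (x * n%:R).
Proof. by rewrite -powR_mulrn ?powR_ge0 // -powRrM. Qed.
Lemma p2V (x : R) : (2 `^ x)^-1 = 2 `^ (- x).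
Proof. by rewrite powRN. Qed.
Lemma p2P (x y : R) : (2 `^ x) `^ y = 2 `^ (x * y).
Proof. by rewrite powRrM. Qed.

Lemma pow_ident (p q k : nat) (gamma c : R) : (p <= q)%N ->
  (cnt p q k)%:R * (((dk p k)%:R ^+ 2)^-1 * (c * ((cnt p q k * dk p k)%N%:R `^ gamma)))
  = c * 2 `^ (q%:R + q%:R * gamma) * (2 `^ (q%:R + q%:R * gamma - 3 * p%:R)) ^+ k.
Proof.
move=> pq.
rewrite natrM /cnt /dk !p2n.
set a := (q + (q - p) * k)%N%:R; set b := (p * k)%N%:R.
rewrite (p2D a b) p2P !p2X p2V.
have -> : forall A B D : R, A * (B * (c * D)) = c * (A * (B * D)).
  by move=> A B D; ring.
rewrite (p2D (- _)) p2D -mulrA p2D; congr (_ * 2 `^ _).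
rewrite /a /b !natrD !natrM natrB //; ring.
Qed.
End pow2.

Lemma rho_lt1 (R : realType) (e : R) : (e < 0)%R -> (2 `^ e < 1)%R.
Proof.
move=> e0; rewrite /powR pnatr_eq0 /= expR_lt1.
by rewrite pmulr_llt0 // ln_gt0 // ltr1n.
Qed.

Lemma G_int {d} {T : measurableType d} {R : realType} {P : probability T R}
  {X : nat -> {RV P >-> R}} {M C gamma : R} :
  (forall n, (1 <= n)%N -> ('E_P[X n] = 0)) ->
  (forall n, (1 <= n)%N -> {ae P, forall w, `|X n w| <= M}%R) ->
  (forall n, (1 <= n)%N ->
     ('V_P[fun w => (\sum_(1 <= k < n.+1) X k w)%R] <= (C * n%:R `^ gamma)%:E)) ->
  (0 <= gamma)%R ->
  forall p q, (p <= q)%N -> (q%:R * (1 + gamma) < 3 * p%:R)%R ->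
  P.-integrable setT (fun w => \sum_(0 <= k <oo) fk (fun k => X k) p q k w).
Proof.
move=> HE HM HV g0 p q pq hpq.
apply/integrableP; split.
  apply: ge0_emeasurable_sum => k *; [exact: fk_ge0 | exact: fk_meas].
rewrite (eq_integral (fun w => \sum_(0 <= k <oo) fk (fun k => X k) p q k w)); last first.
  by move=> w _; rewrite gee0_abs // nneseries_ge0 // => k _ _; exact: fk_ge0.
rewrite integral_nneseries //; last 2 first.
- move=> k; exact: fk_meas.
- by move=> k w _; exact: fk_ge0.
set A := (`|C| * 2 `^ (q%:R + q%:R * gamma))%R.
set r := (2 `^ (q%:R + q%:R * gamma - 3 * p%:R))%R.
apply: (@le_lt_trans _ _ (\sum_(0 <= k <oo) (A * r ^+ k)%:E)).
  apply: lee_nneseries.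
    by move=> k _ _; apply: integral_ge0 => w _; exact: fk_ge0.
  move=> k _; apply: le_trans (fk_bound HE HM HV g0 p q k) _.
  by rewrite pow_ident.
apply: le_lt_trans (@geo_bound _ A r _ _ _) (ltry _).
- by rewrite /A mulr_ge0 // powR_ge0.
- exact: powR_gt0.
- by apply: rho_lt1; lra.
Qed.

Local Close Scope ereal_scope.

Lemma exists_pq (R : realType) (a b : R) : 0 <= a -> a < b ->
  exists p q : nat, [/\ (0 < q)%N, a * q%:R < p%:R & p%:R < b * q%:R].
Proof.
move=> a0 ab.
set q := (Num.truncn ((b - a)^-1)).+1.
have hq : (b - a)^-1 < q%:R := truncnS_gt _.
have ba0 : 0 < b - a by rewrite subr_gt0.
have qd : 1 < (b - a) * q%:R.
  by rewrite -(ltr_pM2l ba0) mulfV ?gt_eqF in hq.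
set p := (Num.truncn (a * q%:R)).+1.
have hp1 : a * q%:R < p%:R := truncnS_gt _.
have hp2 : p%:R <= a * q%:R + 1.
  rewrite /p -addn1 natrD lerD2r truncn_le mulr_ge0 //.
exists p, q; split => //.
rewrite mulrBl in qd; lra.
Qed.

Theorem mainTheorem8 (d : measure_display) (T : measurableType d) (R : realType)
  (P : probability T R) (X : nat -> {RV P >-> R}) (M C gamma : R) :
  0 <= gamma -> gamma < 2 ->
  (forall n, (1 <= n)%N -> ('E_P[X n] = 0)%E) ->
  (forall n, (1 <= n)%N -> {ae P, forall w, `|X n w| <= M}) ->
  (forall n, (1 <= n)%N ->
     ('V_P[fun w => (\sum_(1 <= k < n.+1) X k w)%R] <= (C * n%:R `^ gamma)%:E)%E) ->
  forall eta : R, (gamma + 1) / 3 < eta ->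
  {ae P, forall w,
     (fun n : nat => \sum_(1 <= k < n.+1) X k w) =O_\oo (fun n : nat => n%:R `^ eta)}.
Proof.
move=> g0 g2 HE HM HV eta heta.
have eta0 : 0 <= eta by lra.
have [p [q [q0 hp1 hp2]]] : exists p q : nat,
    [/\ (0 < q)%N, (gamma + 1) / 3 * q%:R < p%:R & p%:R < Num.min eta 1 * q%:R].
  apply: exists_pq; first lra.
  rewrite lt_min heta /=; lra.
have hb1 : Num.min eta 1 <= 1 by rewrite ge_min lexx orbT.
have hb2 : Num.min eta 1 <= eta by rewrite ge_min lexx.
have qR : 0 < q%:R :> R by rewrite ltr0n.
have pq : (p <= q)%N.
  rewrite -(ler_nat R); apply/ltW/(lt_le_trans hp2).
  by rewrite ler_piMl // ltW.
have peta : p%:R <= q%:R * eta.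
  apply/ltW/(lt_le_trans hp2); rewrite mulrC; apply: ler_wpM2l => //; exact: ltW.
have hpq : q%:R * (1 + gamma) < 3 * p%:R.
  move: hp1; rewrite mulrAC ltr_pdivrMr //; lra.
have Hae1 : \forall w \ae P, forall n, (1 <= n)%N -> `|X n w| <= M.
  apply: ae_foralln => n; case: n => [|n]; first by apply: nearW.
  by apply: filterS (HM n.+1 isT) => w h _.
have Hae2 := integrable_ae measurableT (G_int HE HM HV g0 p q pq hpq).
apply: filterS2 Hae1 Hae2 => w h1 h2.
have Gfin := h2 I.
set K := fine (\sum_(0 <= k <oo) fk (fun k => X k) p q k w)%E.
have bound : forall k m, (m < cnt p q k)%N -> term (fun k => X k) p k m w <= K.
  move=> k m mc; rewrite -lee_fin /K fineK //.
  apply: le_trans (@term_le _ (fun m => (term (fun k => X k) p k m w)%:E) _ _ _ mc) _.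
    by move=> i; rewrite lee_fin term_ge0.
  apply: le_trans (@term_le _ (fun k => fk (fun k => X k) p q k w) k.+1 k _ (ltnSn k)) _.
    by move=> i; exact: fk_ge0.
  apply: (@nneseries_lim_ge _ (fun k => fk (fun k => X k) p q k w) xpredT 0%N k.+1).
  by move=> i _ _; exact: fk_ge0.
apply: (@det_O R (fun j => X j w) M (Num.sqrt K) eta p q q0 pq peta eta0 (sqrtr_ge0 _)).
  by move=> n n1; exact: h1.
move=> k m mc; have := bound k m mc.
rewrite /term /Ssum -/(dk p k).
set S := (\sum_(1 <= j < _) X j w).
have D0 : 0 < (dk p k)%:R :> R by rewrite ltr0n expn_gt0.
rewrite ler_pdivrMr ?exprn_gt0 // => hS.
rewrite -sqrtr_sqr -[X in _ * X](ger0_norm (ltW D0)) -sqrtr_sqr -sqrtrM.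
  by rewrite ler_sqrt // (le_trans (sqr_ge0 S) hS).
have := le_trans (sqr_ge0 S) hS.
by rewrite pmulr_lge0 // exprn_gt0.
Qed.
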